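(* Suppose there exists $\alpha>0$ such that $G_{ii}=\alpha$ for all $i\in\{1,\dots,p\}$. Then the function $F(u):=p\log\big(\sum_{i=1}^pe^{(Bu)_i}G_{ii}\big)-\sum_{i=1}^p(Bu)_i$ on $\mathbb{R}^H$ admits $u=0$ as its unique minimizer; consequently the associated rescaling matrix $\mathrm{diag}(\exp(Bu))$ is the identity.
   Context: $\mathcal G=(V,E)$ is a finite DAG; input neurons have no incoming edges, output neurons no outgoing edges, hidden neurons $\mathcal H$ ($H=|\mathcal H|$) are the rest. $\theta\in\mathbb{R}^p$ consists of one weight per edge and one bias $b_v$ per non-input neuron $v$. For $h\in\mathcal H$, $\mathrm{in}_h$ = indices of $b_h$ and of weights of edges entering $h$, $\mathrm{out}_h$ = indices of weights of edges leaving $h$. $B\in\mathbb{R}^{p\times H}$ has $B_{ih}=-1$ if $i\in\mathrm{in}_h$, $1$ if $i\in\mathrm{out}_h$, $0$ otherwise. $G=\partial\Phi(\theta)^\top\partial\Phi(\theta)$ where $\Phi:\mathbb{R}^p\to\mathbb{R}^q$ is the path-lifting: for each path $v_0\to\cdots\to v_d$ along edges ending at an output neuron (for $d=0$, $v_0$ non-input), the coordinate is the product of the weights along the path, times $b_{v_0}$ if $v_0$ is not an input neuron. *)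

(* Defs.v *)
From HB Require Import structures.
From mathcomp Require Import all_boot all_order all_algebra.
From mathcomp Require Import all_classical all_reals all_analysis.
Set Implicit Arguments. Unset Strict Implicit. Unset Printing Implicit Defensive.
Import Order.TTheory GRing.Theory Num.Theory.
Local Open Scope ring_scope.

Definition is_input (V : finType) (e : rel V) (v : V) : bool :=
  [forall w, ~~ e w v].
Definition is_output (V : finType) (e : rel V) (v : V) : bool :=
  [forall w, ~~ e v w].
Definition is_hidden (V : finType) (e : rel V) (v : V) : bool :=
  ~~ is_input e v && ~~ is_output e v.

Definition dag_acyclic (V : finType) (e : rel V) : Prop :=
  forall x y, e x y -> ~~ connect e y x.

(* Parameter indices: (Some w, v) = weight of edge w -> v;
   (None, v) = bias b_v of a non-input neuron v. *)
Definition is_param (V : finType) (e : rel V) (x : option V * V) : bool :=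
  match x.1 with
  | Some w => e w x.2
  | None => ~~ is_input e x.2
  end.

Definition param (V : finType) (e : rel V) : finType :=
  {x : option V * V | is_param e x}.
Definition hidden (V : finType) (e : rel V) : finType :=
  {v : V | is_hidden e v}.

(* value of a parameter given by its "raw" index (0 if not a parameter) *)
Definition thetaE (R : realType) (V : finType) (e : rel V)
  (theta : param e -> R) (x : option V * V) : R :=
  odflt 0 (omap theta (@insub _ (is_param e) (param e) x)).

Definition validpath (V : finType) (e : rel V) (s : seq V) : bool :=
  match s with
  | [::] => false
  | v0 :: s' => [&& path e v0 s', is_output e (last v0 s')
                 & (s' != [::]) || ~~ is_input e v0]
  end.

(* coordinate of the path-lifting Phi(theta) for the path s *)
Definition pathval (R : realType) (V : finType) (e : rel V)
  (theta : param e -> R) (s : seq V) : R :=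
  match s with
  | [::] => 0
  | v0 :: s' =>
      (\prod_(ab <- zip s s') thetaE theta (Some ab.1, ab.2)) *
      (if is_input e v0 then 1 else thetaE theta (None, v0))
  end.

Definition dpath (R : realType) (V : finType) (e : rel V)
  (theta : param e -> R) (s : seq V) (i : param e) : R :=
  derive1 (fun t : R => pathval (fun j => theta j + (if j == i then t else 0)) s) 0.

(* G = dPhi(theta)^T dPhi(theta); paths in a DAG have at most #|V| vertices,
   so they are enumerated as tuples of length d.+1 with d < #|V|. *)
Definition Gmat (R : realType) (V : finType) (e : rel V)
  (theta : param e -> R) (i j : param e) : R :=
  \sum_(d < #|V|) \sum_(t : (d.+1).-tuple V | validpath e t)
     dpath theta t i * dpath theta t j.

Definition Bmat (R : realType) (V : finType) (e : rel V)
  (i : param e) (h : hidden e) : R :=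
  if (val i).2 == val h then -1
  else if (val i).1 == Some (val h) then 1
  else 0.

Definition Bu (R : realType) (V : finType) (e : rel V)
  (u : hidden e -> R) (i : param e) : R :=
  \sum_h Bmat R i h * u h.

Definition Fobj (R : realType) (V : finType) (e : rel V)
  (theta : param e -> R) (u : hidden e -> R) : R :=
  #|param e|%:R * ln (\sum_i expR (Bu u i) * Gmat theta i i)
  - \sum_i Bu u i.

(* Main.v *)
Require Import Defs.
From HB Require Import structures.
From mathcomp Require Import all_boot all_order all_algebra.
From mathcomp Require Import all_classical all_reals all_analysis.
Import Order.TTheory GRing.Theory Num.Theory.
Local Open Scope ring_scope.

Section S.
Variable R : realType.

Lemma amgm_term (m y : R) : expR m * (1 + (y - m)) <= expR y.
Proof.
have -> : expR y = expR m * expR (y - m) by rewrite -expRD addrC subrK.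
by rewrite ler_wpM2l ?expR_ge0 // expR_ge1Dx.
Qed.

Lemma amgm_sum (I : finType) (x : I -> R) : (0 < #|I|)%N ->
  \sum_i (1 + (x i - (\sum_j x j) / #|I|%:R)) = #|I|%:R.
Proof.
move=> n0.
rewrite big_split /= sumr_const big_split /= sumrN sumr_const.
have nz : (#|I|%:R : R) != 0 by rewrite pnatr_eq0 -lt0n.
rewrite -/#|I| -[(_ / _) *+ _]mulr_natr divfK // subrr addr0 //.
Qed.

Lemma amgm_le (I : finType) (x : I -> R) : (0 < #|I|)%N ->
  #|I|%:R * expR ((\sum_i x i) / #|I|%:R) <= \sum_i expR (x i).
Proof.
move=> n0; set m := (\sum_i x i) / #|I|%:R.
rewrite -(@amgm_sum _ x n0) mulrC mulr_sumr.
by apply: ler_sum => i _; apply: amgm_term.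
Qed.

Lemma amgm_eq (I : finType) (x : I -> R) : (0 < #|I|)%N ->
  \sum_i expR (x i) = #|I|%:R * expR ((\sum_i x i) / #|I|%:R) ->
  forall i, x i = (\sum_j x j) / #|I|%:R.
Proof.
move=> n0 H; set m := (\sum_j x j) / #|I|%:R.
have H0 : \sum_i (expR (x i) - expR m * (1 + (x i - m))) = 0.
  by rewrite sumrB -mulr_sumr amgm_sum // H mulrC subrr.
move=> i.
have Hp : forall j : I, true -> 0 <= expR (x j) - expR m * (1 + (x j - m)).
  move=> j _; rewrite subr_ge0; exact: amgm_term.
have := psumr_eq0P Hp H0 (i:=i) isT.
move/eqP; rewrite subr_eq0 => /eqP E.
apply/eqP; rewrite -subr_eq0; apply/negP => /negP nz.
have := expR_gt1Dx nz.
have -> : expR (x i - m) = expR (x i) / expR m by rewrite expRB.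
rewrite E mulrC mulKf ?ltxx //.
by rewrite gt_eqF ?expR_gt0.
Qed.

Lemma ln_key (a S s : R) (n : nat) : 0 < a -> (0 < n)%N -> 0 < S ->
  n%:R * ln (a * S) - s - n%:R * ln (a * n%:R) =
  n%:R * (ln (a * S) - ln (a * n%:R * expR (s / n%:R))).
Proof.
move=> a0 n0 S0.
have nz : (n%:R : R) != 0 by rewrite pnatr_eq0 -lt0n.
rewrite (@lnM _ (a * n%:R) (expR (s / n%:R))) ?expRK; last 2 first.
- by rewrite posrE mulr_gt0 // ltr0n.
- by rewrite posrE expR_gt0.
rewrite !mulrBr mulrDr mulrCA divff // mulr1.
by rewrite opprD addrA addrAC.
Qed.
End S.

Lemma exists_output (V : finType) (e : rel V) : dag_acyclic e ->
  forall h, ~~ is_input e h -> exists y, ~~ is_input e y && is_output e y.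
Proof.
move=> Hac h Hh.
have P0 : connect e h h && ~~ is_input e h by rewrite connect0.
case: (@arg_minnP V h (fun y => connect e h y && ~~ is_input e y) (fun y => #|[set z | connect e y z]|) P0).
move=> y /andP[Hhy Hy] Hmin.
exists y; rewrite Hy /=.
apply/forallP => z; apply/negP => Eyz.
have Hz : connect e h z && ~~ is_input e z.
  rewrite (connect_trans Hhy (connect1 Eyz)) /=.
  by apply/negP => /forallP /(_ y); rewrite Eyz.
have := Hmin z Hz.
apply/negP; rewrite -ltnNge; apply: proper_card.
apply/properP; split.
  apply/fintype.subsetP => w; rewrite !inE => Hzw.
  exact: connect_trans (connect1 Eyz) Hzw.
exists y; rewrite !inE ?connect0 //.
exact: Hac.
Qed.


Lemma Bbias (R : realType) (V : finType) (e : rel V) (u : hidden e -> R) v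
  (Hv : is_param e (None, v)) :
  Bu u (exist _ (None, v) Hv : param e) =
  \sum_h (if v == val h then -1 else 0) * u h.
Proof.
apply: eq_bigr => h _; rewrite /Bmat /=.
by case: ifP.
Qed.

Theorem propositionJ1 (R : realType) (V : finType) (e : rel V)
  (Hacyc : dag_acyclic e) (theta : param e -> R) (alpha : R)
  (Halpha : 0 < alpha) (HG : forall i : param e, Gmat theta i i = alpha) :
  (forall u : hidden e -> R, Fobj theta (fun _ => 0) <= Fobj theta u) /\
  (forall u : hidden e -> R,
     (forall v : hidden e -> R, Fobj theta u <= Fobj theta v) ->
     u = (fun _ => 0) /\ (forall i : param e, expR (Bu u i) = 1)).
Proof.
have B0 : forall i, Bu (fun _ : hidden e => 0 : R) i = 0.
  by move=> i; rewrite /Bu big1 // => h _; rewrite mulr0.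
case: (pickP (fun _ : hidden e => true)) => [h0 _ | hE]; last first.
  have U0 : forall u : hidden e -> R, u = (fun _ => 0).
    by move=> u; apply: funext => h; have := hE h.
  split; first by move=> u; rewrite (U0 u).
  move=> u _; split; first exact: U0.
  by move=> i; rewrite (U0 u) B0 expR0.
have /andP[Hin0 Hout0] := valP h0.
have p0 : (0 < #|param e|)%N.
  by apply/card_gt0P; exists (exist _ (None, val h0) Hin0 : param e).
set p := #|param e|.
have Fu : forall u, Fobj theta u =
    p%:R * ln (alpha * \sum_i expR (Bu u i)) - \sum_i Bu u i.
  move=> u; rewrite /Fobj (eq_bigr (fun i => expR (Bu u i) * alpha)) => [|i _];
    last by rewrite HG.
  by rewrite -mulr_suml [in ln _]mulrC.
have F0 : Fobj theta (fun _ => 0) = p%:R * ln (alpha * p%:R).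
  rewrite Fu (eq_bigr (fun _ => 1)) => [|i _]; last by rewrite B0 expR0.
  rewrite [X in _ - X]big1 ?subr0 // sumr_const. by [].
have Spos : forall u : hidden e -> R, 0 < \sum_i expR (Bu u i).
  move=> u; rewrite (bigD1 (exist _ (None, val h0) Hin0 : param e)) //=.
  by rewrite ltr_pwDl ?expR_gt0 // sumr_ge0 // => i _; rewrite expR_ge0.
have key : forall u : hidden e -> R,
  Fobj theta u - Fobj theta (fun _ => 0) =
  p%:R * (ln (alpha * \sum_i expR (Bu u i)) -
          ln (alpha * p%:R * expR ((\sum_i Bu u i) / p%:R))).
  by move=> u; rewrite Fu F0 ln_key.
have am : forall u : hidden e -> R,
  alpha * p%:R * expR ((\sum_i Bu u i) / p%:R) <= alpha * \sum_i expR (Bu u i).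
  by move=> u; rewrite -mulrA ler_pM2l //; exact: (@amgm_le _ _ (Bu u) p0).
have part1 : forall u : hidden e -> R, Fobj theta (fun _ => 0) <= Fobj theta u.
  move=> u; rewrite -subr_ge0 key mulr_ge0 ?ler0n // subr_ge0 ler_ln ?am //.
    by rewrite posrE !mulr_gt0 ?expR_gt0 ?ltr0n.
  by rewrite posrE mulr_gt0.
split; first exact: part1.
move=> u Hu.
have Eq : Fobj theta u - Fobj theta (fun _ => 0) = 0.
  by apply/eqP; rewrite eq_le subr_le0 Hu subr_ge0 part1.
move: Eq; rewrite key => /eqP; rewrite mulf_eq0 pnatr_eq0 eqn0Ngt p0 /= subr_eq0 => /eqP.
move=> E.
have E2 : \sum_i expR (Bu u i) = p%:R * expR ((\sum_i Bu u i) / p%:R).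
  apply: (mulfI (lt0r_neq0 Halpha)); rewrite mulrA.
  apply: ln_inj E; rewrite posrE.
    exact: mulr_gt0.
  by rewrite !mulr_gt0 ?expR_gt0 ?ltr0n.
have Hall := @amgm_eq _ _ (Bu u) p0 E2.
have [y /andP[Hy1 Hy2]] := @exists_output _ e Hacyc _ Hin0.
have Hy0 : Bu u (exist _ (None, y) Hy1 : param e) = 0.
  rewrite Bbias big1 // => h _.
  have /andP[_ Ho] := valP h.
  case: eqP => [Ey|]; last by rewrite mul0r.
  by move: Ho; rewrite -Ey Hy2.
have Ball : forall i, Bu u i = 0.
  by move=> i; rewrite Hall -(Hall (exist _ (None, y) Hy1 : param e)).
have U0 : u = (fun _ => 0).
  apply: funext => h.
  have /andP[Hh _] := valP h.
  have := Ball (exist _ (None, val h) Hh : param e).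
  rewrite Bbias (bigD1 h) //= eqxx big1 ?addr0.
    by move/eqP; rewrite mulN1r oppr_eq0 => /eqP.
  move=> h' Hne; case: eqP => [E'|]; last by rewrite mul0r.
  by move: Hne; rewrite (val_inj E') eqxx.
split; first exact: U0.
by move=> i; rewrite Ball expR0.
Qed.
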